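(* Let $Q$ be a conjunctive query without self-joins that is connected, non-boolean, and contains no universal attribute and no vacuum relation. Then $Q$ contains a hard structure.
   Context: CQ $Q(\mathbf{A}) :- R_1(\mathbb{A}_1),\dots,R_p(\mathbb{A}_p)$ with distinct relation symbols, $\mathrm{attr}(R_i)=\mathbb{A}_i$, $\mathrm{attr}(Q)=\bigcup_i\mathbb{A}_i$, $\mathrm{head}(Q)=\mathbf{A}$. $Q$ is boolean if $\mathbf{A}=\emptyset$; connected if the graph on relations, with edges between relations sharing an attribute, is connected; a relation is vacuum if its attribute set is empty; an attribute is universal if it lies in $\mathbf{A}$ and in every $\mathbb{A}_i$. Standing assumption: distinct relations have distinct attribute sets. $R_j$ is exogenous if another relation $R_i$ has $\mathrm{attr}(R_i)\subsetneq\mathrm{attr}(R_j)$, endogenous otherwise. A path between relations using only attributes in $S$ is a sequence of relations with consecutive ones sharing an attribute of $S$. Triad-like structure: three endogenous relations such that each pair is joined by a path using only attributes in $\mathrm{attr}(Q)\setminus(\mathrm{head}(Q)\cup\mathrm{attr}(R))$, $R$ the third. $R_j$ is dominated by $R_i$ if (1) $\mathrm{attr}(R_i)\subseteq\mathrm{attr}(R_j)$; (2) for every $R_k$ with $\mathrm{attr}(R_i)\setminus\mathrm{attr}(R_k)\ne\emptyset$, $\mathrm{attr}(R_j)\cap\mathrm{attr}(R_k)\subseteq\mathrm{attr}(R_i)\cap\mathrm{head}(Q)$; (3) $\mathrm{attr}(R_i)\subseteq\mathrm{head}(Q)$ or $\mathrm{head}(Q)\subseteq\mathrm{attr}(R_i)$;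 non-dominated relations are dominated by no other relation. Strand: two non-dominated relations $R_i,R_j$ with $\mathrm{head}(Q)\cap\mathrm{attr}(R_i)\ne\mathrm{head}(Q)\cap\mathrm{attr}(R_j)$ and $(\mathrm{attr}(R_i)\cap\mathrm{attr}(R_j))\setminus\mathrm{head}(Q)\ne\emptyset$. The head join of non-dominated relations is the full query of non-dominated relations restricted to $\mathrm{head}(Q)$; a full query is hierarchical if for all attributes $A,B$ the sets of relations containing them are nested or disjoint. $Q$ contains a hard structure if it has a triad-like structure or a strand, or the head join of its non-dominated relations is non-hierarchical. *)

(* Defs.v *)
From mathcomp Require Import all_boot.
Set Implicit Arguments. Unset Strict Implicit. Unset Printing Implicit Defensive.

(* A conjunctive query without self-joins:
   - [Att] : finite type of attribute names,
   - [Rel] : finite type indexing the relation atoms R_1..R_p (distinct symbols),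
   - [attr i] : the attribute set attr(R_i),
   - [head]  : the head attributes head(Q). *)
Section CQ.
Variables (Att Rel : finType) (attr : Rel -> {set Att}) (head : {set Att}).

Definition attrQ : {set Att} := \bigcup_(i : Rel) attr i.

Definition head_in_body : Prop := head \subset attrQ.

Definition distinct_attr_sets : Prop := injective attr.

Definition is_boolean : Prop := head = set0.

Definition share_in (S : {set Att}) : rel Rel :=
  fun i j => [exists a in S, (a \in attr i) && (a \in attr j)].
Definition path_using (S : {set Att}) (i j : Rel) : Prop :=
  connect (share_in S) i j.

Definition connected_query : Prop :=
  forall i j : Rel, path_using attrQ i j.

Definition vacuum (i : Rel) : Prop := attr i = set0.

Definition universal (a : Att) : Prop :=
  a \in head /\ forall i : Rel, a \in attr i.

Definition exogenous (j : Rel) : Prop := exists i : Rel, attr i \proper attr j.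
Definition endogenous (j : Rel) : Prop := ~ exogenous j.

Definition triad_like : Prop :=
  exists r1 r2 r3 : Rel,
    [/\ r1 != r2, r1 != r3 & r2 != r3] /\
    [/\ endogenous r1, endogenous r2 & endogenous r3] /\
    [/\ path_using (attrQ :\: (head :|: attr r3)) r1 r2,
        path_using (attrQ :\: (head :|: attr r2)) r1 r3 &
        path_using (attrQ :\: (head :|: attr r1)) r2 r3].

Definition dominated_by (j i : Rel) : Prop :=
  [/\ attr i \subset attr j,
      (forall k : Rel, attr i :\: attr k != set0 ->
          attr j :&: attr k \subset attr i :&: head) &
      (attr i \subset head \/ head \subset attr i)].

Definition non_dominated (j : Rel) : Prop :=
  forall i : Rel, i != j -> ~ dominated_by j i.

Definition strand : Prop :=
  exists i j : Rel,
    [/\ non_dominated i, non_dominated j,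
        head :&: attr i != head :&: attr j &
        (attr i :&: attr j) :\: head != set0].

(* head join of the non-dominated relations: for each non-dominated R_i,
   an atom with attribute set attr(R_i) ∩ head(Q). *)
Definition headjoin_rels_with (a : Att) : Rel -> Prop :=
  fun i => non_dominated i /\ a \in attr i :&: head.

Definition headjoin_hierarchical : Prop :=
  forall a b : Att,
    (forall i, headjoin_rels_with a i -> headjoin_rels_with b i) \/
    (forall i, headjoin_rels_with b i -> headjoin_rels_with a i) \/
    (forall i, ~ (headjoin_rels_with a i /\ headjoin_rels_with b i)).

Definition has_hard_structure : Prop :=
  triad_like \/ strand \/ ~ headjoin_hierarchical.

End CQ.

(* Main.v *)
Require Import Defs.
From mathcomp Require Import all_boot.
From Stdlib Require Import Classical ClassicalEpsilon.
Set Implicit Arguments. Unset Strict Implicit. Unset Printing Implicit Defensive.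

Section L.
Variables (Att Rel : finType) (attr : Rel -> {set Att}) (head : {set Att}).
Hypothesis inj : injective attr.
Hypothesis nvac : forall i, attr i != set0.

Definition sh (i j : Rel) : Prop := exists x, x \in attr i /\ x \in attr j.

Lemma dom_lt r i : i != r -> dominated_by attr head r i -> #|attr i| < #|attr r|.
Proof.
move=> ne [sub _ _]; apply: proper_card; rewrite properEneq sub andbT.
apply/negP => /eqP /inj E; by rewrite E eqxx in ne.
Qed.

Lemma not_nd r : ~ non_dominated attr head r ->
  exists2 i, i != r & dominated_by attr head r i.
Proof.
move=> H; apply: NNPP => H2; apply: H => i ne D; apply: H2; by exists i.
Qed.

Lemma descent (P : Rel -> Prop) :
  (forall r, non_dominated attr head r -> P r) ->
  (forall r i, i != r -> dominated_by attr head r i -> P i -> P r) ->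
  forall r, P r.
Proof.
move=> H1 H2.
suff: forall n r, #|attr r| <= n -> P r by move=> H r; apply: (H _ r (leqnn _)).
elim=> [|n IH] r Hr.
- have: attr r == set0 by rewrite -cards_eq0 -leqn0.
  by rewrite (negPf (nvac r)).
- case: (classic (non_dominated attr head r)) => [|/not_nd [i ne D]]; first exact: H1.
  apply: (H2 r i ne D); apply: IH; rewrite -ltnS; exact: leq_trans (dom_lt ne D) Hr.
Qed.

Lemma keyK r i k : dominated_by attr head r i -> sh k r -> sh k i.
Proof.
move=> [sub H2 _] [x [xk xr]].
case: (boolP (attr i \subset attr k)) => s.
- have /set0Pn [y yi] := nvac i. exists y; split => //; exact: (subsetP s).
- have: attr i :\: attr k != set0 by rewrite setD_eq0.
  move=> /H2 /subsetP /(_ x); rewrite inE xr xk => /(_ isT).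
  rewrite inE => /andP [xi _]. by exists x.
Qed.

Lemma sh_sym i j : sh i j -> sh j i.
Proof. by move=> [x [a b]]; exists x. Qed.

Lemma lemF r : exists2 r', non_dominated attr head r' & attr r' \subset attr r.
Proof.
move: r; apply: descent => [r nd|r i ne [sub _ _] [r' nd s]]; first by exists r.
exists r' => //; exact: subset_trans s sub.
Qed.

Lemma lemH r : attr r :&: head != set0 ->
  exists2 r', non_dominated attr head r' & attr r' :&: head != set0.
Proof.
move: r; apply: descent => [r nd H|r i ne [sub _ h3] IH H]; first by exists r.
apply: IH; case: h3 => h3.
- by move: h3 => /setIidPl ->.
- move: h3 => /setIidPr; rewrite setIC => ->; apply/negP => /eqP E.
  by move: H; rewrite E; rewrite setI0 eqxx.
Qed.

Lemma lemE k : forall n, non_dominated attr head n -> sh k n ->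
  exists k', [/\ non_dominated attr head k', (forall m, sh m k -> sh m k') & sh k' n].
Proof.
move: k; apply: descent => [k nd n _ s|k i ne D IH n nn s].
- by exists k; split.
- have /sh_sym s2 : sh n i by apply: keyK D (sh_sym s).
  have [k' [nk' H1 H2]] := IH n nn s2.
  exists k'; split => // m /(keyK D); exact: H1.
Qed.

End L.

Theorem lemma16 (Att Rel : finType) (attr : Rel -> {set Att}) (head : {set Att}) :
  head_in_body attr head ->
  distinct_attr_sets attr ->
  connected_query attr ->
  ~ is_boolean head ->
  (forall a : Att, ~ universal attr head a) ->
  (forall i : Rel, ~ vacuum attr i) ->
  has_hard_structure attr head.
Proof.
move=> hb inj conn nb nu nv.
have nvac : forall i, attr i != set0 by move=> i; apply/eqP; exact: nv.
apply: NNPP => Hn.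
have nstr : ~ strand attr head by move=> s; apply: Hn; right; left.
have hier : headjoin_hierarchical attr head by apply: NNPP => h; apply: Hn; right; right.
pose pb (P : Prop) : bool := if excluded_middle_informative P then true else false.
have pbP : forall P, pb P = true <-> P.
  by move=> P; rewrite /pb; case: excluded_middle_informative => p; split.
pose N b := [set i | pb (headjoin_rels_with attr head b i)].
have NP : forall b i, (i \in N b) <-> headjoin_rels_with attr head b i.
  by move=> b i; rewrite inE; apply: pbP.
have /set0Pn [b0 b0h] : head != set0 by apply/eqP.
pose a := [arg max_(b > b0 in head) #|N b|].
have [ah amax] : a \in head /\ forall b, b \in head -> #|N b| <= #|N a|.
  by rewrite /a; case: arg_maxnP => // c ch cm; split.
have [i0 i0a] : exists i0, i0 \in N a.
  have := subsetP hb b0 b0h; rewrite /attrQ => /bigcupP [r _ b0r].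
  have : attr r :&: head != set0 by apply/set0Pn; exists b0; rewrite inE b0r b0h.
  move=> /(@lemH _ _ _ head inj nvac _) [r' nd /set0Pn [c]]; rewrite inE => /andP [cr ch].
  have : r' \in N c by apply/NP; split => //; rewrite inE cr ch.
  move=> rc; have : 0 < #|N a|.
    apply: leq_trans (amax c ch); rewrite card_gt0; apply/set0Pn; by exists r'.
  by rewrite card_gt0 => /set0Pn.
have [r anr] : exists r, a \notin attr r.
  apply: NNPP => H; apply: (nu a); split => // i; apply: NNPP => ai; apply: H.
  by exists i; apply/negP.
have [j ndj sj] := lemF head inj nvac r.
have anj : a \notin attr j by apply/negP => /(subsetP sj); apply/negP.
have sep : forall i j x, i \in N a -> non_dominated attr head j -> a \notin attr j ->
    x \in attr i -> x \in attr j -> False.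
  move=> i j' x /NP [ndi]; rewrite inE => /andP [ai _] ndj' anj' xi xj.
  have neq : head :&: attr i != head :&: attr j'.
    apply/negP => /eqP E; have : a \in head :&: attr i by rewrite inE ah ai.
    by rewrite E inE (negPf anj') andbF.
  have xh : x \in head.
    case: (boolP (x \in head)) => // xnh; exfalso; apply: nstr; exists i, j'; split => //.
    by apply/set0Pn; exists x; rewrite !inE xnh xi xj.
  have hjx : headjoin_rels_with attr head x j' by split => //; rewrite inE xj xh.
  have hja : ~ headjoin_rels_with attr head a j' by move=> [_]; rewrite inE (negPf anj').
  case: (hier a x) => [H|[H|H]].
  - have sub : N a \subset N x by apply/subsetP => k /NP /H /NP.
    have E : N a == N x by rewrite eqEcard sub amax.
    by apply: hja; apply/NP; rewrite (eqP E); apply/NP.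
  - by apply: hja; apply: H.
  - by apply: (H i); split; split => //; rewrite inE ?ai ?ah ?xi ?xh.
pose S r := exists2 i, i \in N a & forall k, sh attr k r -> sh attr k i.
have closure : forall r k, S r -> share_in attr (attrQ attr) r k -> S k.
  move=> r' k [i ia Hi] /existsP [x /andP [_ /andP [xr xk]]].
  have skr : sh attr k r' by exists x.
  have ski := Hi k skr.
  have [ndi _] := proj1 (NP _ _) ia.
  have [k' [ndk' H1 H2]] := lemE inj nvac ndi ski.
  exists k' => //.
  apply/NP; split => //; rewrite inE ah andbT.
  case: (boolP (a \in attr k')) => // ank'.
  case: H2 => y [yk yi]; exfalso; exact: (sep i k' y ia ndk' ank' yi yk).
have Si0 : S i0 by exists i0.
have Sj : S j.
  case/connectP: (conn i0 j) => p pth ->.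
  elim: p i0 pth Si0 {i0a} => [|y p IH] x //= /andP [e pth] Sx.
  apply: IH pth _; exact: closure Sx e.
case: Sj => i ia Hi.
have /set0Pn [x xj] := nvac j.
have [y [yj yi]] : sh attr j i by apply: Hi; exists x.
exact: (sep i j y ia ndj anj yi yj).
Qed.
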